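(* Let $a,b,x\ge0$ be integers and $p\in[0,1]$, $q=1-p$. If all transition probabilities $p(r,s)$, $r,s>0$, equal $p$, then $$B(a,b,x)=\sum_{t=0}^{x}\binom{a+b+x}{a+t}p^{a+t}q^{b+x-t}.$$
   Context: Constrained walks: let $p(r,s)\in[0,1]$ be given for all integers $r,s>0$. A walker at a lattice point $(r,s)$ with $r,s>0$ moves West to $(r-1,s)$ with probability $p(r,s)$ and South to $(r,s-1)$ with probability $1-p(r,s)$, independently of the past; a walker at a point $(r,0)$ with $r>0$ always moves West, and a walker at $(0,s)$ with $s>0$ always moves South, until the origin is reached. Two walkers $U$ and $L$ start at $(a,b+x+1)$ and $(a+x+1,b)$ respectively and move simultaneously and independently, one step per time unit. $B(a,b,x)$ is the probability that the first time the two walkers occupy the same lattice point is when they both reach the origin. *)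

(* Defs.v *)
From mathcomp Require Import all_boot all_order all_algebra.
Set Implicit Arguments. Unset Strict Implicit. Unset Printing Implicit Defensive.
Import Order.TTheory GRing.Theory Num.Theory.
Local Open Scope ring_scope.

Section Walks.
Variable R : realFieldType.

(* A move is a bool: true = West (r decreases), false = South (s decreases). *)
Definition step (rs : nat * nat) (w : bool) : nat * nat :=
  if w then (rs.1.-1, rs.2) else (rs.1, rs.2.-1).

(* On the axes the move is forced; from the origin no move is taken
   (probability 0; never used for walks of the relevant length). *)
Definition stepP (P : nat -> nat -> R) (rs : nat * nat) (w : bool) : R :=
  let: (r, s) := rs in
  if (0 < r)%N && (0 < s)%N then (if w then P r s else 1 - P r s)
  else if (0 < r)%N then (if w then 1 else 0)
  else if (0 < s)%N then (if w then 0 else 1)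
  else 0.

Fixpoint walkP (P : nat -> nat -> R) (rs : nat * nat) (ws : seq bool) : R :=
  match ws with
  | [::] => 1
  | w :: ws' => stepP P rs w * walkP P (step rs w) ws'
  end.

Definition posn (rs : nat * nat) (ws : seq bool) (t : nat) : nat * nat :=
  foldl step rs (take t ws).

(* B(a,b,x): U starts at (a, b+x+1), L at (a+x+1, b); both reach the origin
   exactly at time n = a+b+x+1. The event is that at no time t < n the two
   walkers occupy the same lattice point. *)
Definition B (P : nat -> nat -> R) (a b x : nat) : R :=
  let n := (a + b + x).+1 in
  \sum_(u : n.-tuple bool) \sum_(l : n.-tuple bool)
    (if [forall t : 'I_n, posn (a, b + x.+1)%N u t != posn (a + x.+1, b)%N l t]
     then walkP P (a, b + x.+1)%N u * walkP P (a + x.+1, b)%N l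
     else 0).
End Walks.

(* Main.v *)
Require Import Defs.
From mathcomp Require Import all_boot all_order all_algebra.
From mathcomp Require Import zify ring lra.
Import Order.TTheory GRing.Theory Num.Theory.
Local Open Scope ring_scope.

Lemma sum_tuple0 {R : realFieldType} (F : 0.-tuple bool -> R) :
  \sum_(u : 0.-tuple bool) F u = F [tuple].
Proof.
rewrite (eq_bigr (fun _ => F [tuple])); last by move=> u _; rewrite tuple0.
by rewrite sumr_const card_tuple card_bool expn0.
Qed.

Lemma sum_tupleS {R : realFieldType} n (F : n.+1.-tuple bool -> R) :
  \sum_(u : n.+1.-tuple bool) F u =
  \sum_(w : bool) \sum_(u : n.-tuple bool) F (cons_tuple w u).
Proof.
rewrite pair_big /=.
rewrite (reindex (fun wu : bool * n.-tuple bool => cons_tuple wu.1 wu.2)) //=.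
exists (fun t : n.+1.-tuple bool => (thead t, behead_tuple t)) => [[w u]|t] _ /=.
- by congr pair; apply: val_inj.
- by rewrite [RHS]tuple_eta; apply: val_inj.
Qed.

Definition Q {R : realFieldType} (P : nat -> nat -> R) U L n :=
  \sum_(u : n.-tuple bool) \sum_(l : n.-tuple bool)
    (if [forall t : 'I_n, posn U u t != posn L l t]
     then walkP P U u * walkP P L l else 0).

Lemma Q0 {R : realFieldType} (P : nat -> nat -> R) U L : Q P U L 0 = 1.
Proof.
rewrite /Q !sum_tuple0.
rewrite (_ : [forall t : 'I_0, _] = true); last by apply/forallP => -[].
by rewrite /= mulr1.
Qed.

Lemma forall_ordS n (f : 'I_n.+1 -> bool) :
  [forall t, f t] = f ord0 && [forall t : 'I_n, f (lift ord0 t)].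
Proof.
apply/forallP/andP => [H|[H0 /forallP H] t]; first by split => //; apply/forallP => t.
by case: (unliftP ord0 t) => [j ->|->].
Qed.

Lemma posn_lift n U w (u : seq bool) (t : 'I_n) :
  posn U (w :: u) (lift ord0 t) = posn (step U w) u t.
Proof. by rewrite lift0. Qed.

Lemma Qrec {R : realFieldType} (P : nat -> nat -> R) U L n : Q P U L n.+1 =
  if U == L then 0 else
  \sum_(w1 : bool) \sum_(w2 : bool)
    (stepP P U w1 * stepP P L w2) * Q P (step U w1) (step L w2) n.
Proof.
rewrite /Q sum_tupleS.
transitivity (\sum_(w1 : bool) \sum_(u : n.-tuple bool) \sum_(w2 : bool) \sum_(l : n.-tuple bool)
   (if U == L then 0 else stepP P U w1 * stepP P L w2 *
     (if [forall t : 'I_n, posn (step U w1) u t != posn (step L w2) l t]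
      then walkP P (step U w1) u * walkP P (step L w2) l else 0))).
  apply: eq_bigr => w1 _; apply: eq_bigr => u _; rewrite sum_tupleS.
  apply: eq_bigr => w2 _; apply: eq_bigr => l _.
  rewrite forall_ordS.
  under eq_forallb => t do rewrite !posn_lift.
  rewrite /=.
  case: eqP => _ /=; first by [].
  by case: ifP => _; [ring | rewrite mulr0].
case: eqP => _.
  by rewrite big1 // => w1 _; rewrite big1 // => u _; rewrite big1 // => w2 _; rewrite big1.
apply: eq_bigr => w1 _; rewrite exchange_big /=; apply: eq_bigr => w2 _.
rewrite mulr_sumr; apply: eq_bigr => u _; rewrite mulr_sumr; apply: eq_bigr => l _.
by [].
Qed.

Lemma BQ {R : realFieldType} (P : nat -> nat -> R) a b x :
  B P a b x = Q P (a, b + x.+1)%N (a + x.+1, b)%N (a + b + x).+1.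
Proof. by []. Qed.

Lemma QB {R : realFieldType} (P : nat -> nat -> R) U L n a b x :
  U = (a, b + x.+1)%N -> L = (a + x.+1, b)%N -> n = (a+b+x).+1 -> Q P U L n = B P a b x.
Proof. by move=> -> -> ->. Qed.

Lemma Qeq {R : realFieldType} (P : nat -> nat -> R) U L n :
  U = L -> (0 < n)%N -> Q P U L n = 0.
Proof. by move=> -> ; case: n => // n _; rewrite Qrec eqxx. Qed.

Ltac solve_qb := apply: QB; rewrite /=;
  (match goal with |- (_, _) = (_, _) => congr pair | _ => idtac end); lia.

Lemma R1 {R : realFieldType} (P : nat -> nat -> R) p a b x :
  (forall r s : nat, (0 < r)%N -> (0 < s)%N -> P r s = p) ->
  B P a.+1 b.+1 x = p * p * B P a b.+1 x + p * (1 - p) * B P a b x.+1 +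
    ((1 - p) * p * (if x is x'.+1 then B P a.+1 b.+1 x' else 0) + (1 - p) * (1 - p) * B P a.+1 b x).
Proof.
move=> HP; rewrite BQ Qrec.
case: eqP => [[]|_]; first lia.
rewrite !big_bool /= /stepP.
rewrite !HP; try lia.
have Hs : forall m n, (0 < m.+1 + n)%N by [].
congr (_ * _ + _ * _ + (_ * _ + _ * _)); try solve_qb.
case: x => [|x].
  by rewrite Qeq //; congr pair; lia.
solve_qb.
Qed.

Lemma R2 {R : realFieldType} (P : nat -> nat -> R) p b x :
  (forall r s : nat, (0 < r)%N -> (0 < s)%N -> P r s = p) ->
  B P 0 b.+1 x = p * (if x is x'.+1 then B P 0 b.+1 x' else 0) + (1 - p) * B P 0 b x.
Proof.
move=> HP; rewrite BQ Qrec.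
case: eqP => [[]|_]; first lia.
rewrite !big_bool /= /stepP /=.
rewrite !HP; try lia.
rewrite !mul0r !add0r !mul1r.
congr (_ * _ + _ * _); try solve_qb.
case: x => [|x].
  by rewrite Qeq //; congr pair; lia.
solve_qb.
Qed.

Lemma R3 {R : realFieldType} (P : nat -> nat -> R) p a x :
  (forall r s : nat, (0 < r)%N -> (0 < s)%N -> P r s = p) ->
  B P a.+1 0 x = p * B P a 0 x + (1 - p) * (if x is x'.+1 then B P a.+1 0 x' else 0).
Proof.
move=> HP; rewrite BQ Qrec.
case: eqP => [[]|_]; first lia.
rewrite !big_bool /= /stepP /=.
rewrite !HP; try lia.
rewrite !mulr0 !mul0r !addr0 !mulr1.
congr (_ * _ + _ * _); try solve_qb.
case: x => [|x].
  by rewrite Qeq //; congr pair; lia.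
solve_qb.
Qed.

Lemma R4 {R : realFieldType} (P : nat -> nat -> R) x :
  B P 0 0 x = if x is x'.+1 then B P 0 0 x' else 1.
Proof.
rewrite BQ Qrec.
case: eqP => [[]|_]; first lia.
rewrite !big_bool /= /stepP /=.
rewrite !mulr0 !mul0r !addr0 !add0r !mul1r.
case: x => [|x].
  by rewrite Q0.
solve_qb.
Qed.

Definition f {R : realFieldType} (p : R) N k := ('C(N, k))%:R * p ^+ k * (1 - p) ^+ (N - k).
Definition G {R : realFieldType} (p : R) N lo len := \sum_(t < len) f p N (lo + t).

Lemma f_big {R : realFieldType} (p : R) N k : (N < k)%N -> f p N k = 0.
Proof. by move=> H; rewrite /f bin_small // !mul0r. Qed.

Lemma f_pascal {R : realFieldType} (p : R) N k :
  f p N.+1 k.+1 = p * f p N k + (1 - p) * f p N k.+1.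
Proof.
rewrite /f binS natrD subSS.
case: (ltnP k N) => H.
  have -> : (N - k = (N - k.+1).+1)%N by lia.
  rewrite !exprS; ring.
rewrite (bin_small (n:=N) (m:=k.+1)); last lia.
rewrite !mul0r mulr0 !addr0 exprS; ring.
Qed.

Lemma f_pascal0 {R : realFieldType} (p : R) N : f p N.+1 0 = (1 - p) * f p N 0.
Proof. by rewrite /f !bin0 !subn0 exprS; ring. Qed.

Lemma G_pascal {R : realFieldType} (p : R) N lo len :
  G p N.+1 lo.+1 len = p * G p N lo len + (1 - p) * G p N lo.+1 len.
Proof.
rewrite /G !mulr_sumr -big_split /=; apply: eq_bigr => t _.
by rewrite (_ : (lo.+1 + t = (lo + t).+1)%N) ?f_pascal //; lia.
Qed.

Lemma G_pascal0 {R : realFieldType} (p : R) N len :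
  G p N.+1 0 len.+1 = (1 - p) * G p N 0 len.+1 + p * G p N 0 len.
Proof.
rewrite /G big_ord_recl [X in _ = _ * X + _]big_ord_recl /= !add0n f_pascal0.
rewrite mulrDr -addrA; congr (_ + _).
rewrite !mulr_sumr -big_split /=; apply: eq_bigr => t _.
by rewrite /bump /= add1n f_pascal addrC.
Qed.

Lemma G_recr {R : realFieldType} (p : R) N lo len :
  G p N lo len.+1 = G p N lo len + f p N (lo + len).
Proof. by rewrite /G big_ord_recr. Qed.

Lemma G0 {R : realFieldType} (p : R) N lo : G p N lo 0 = 0.
Proof. by rewrite /G big_ord0. Qed.

Lemma G_full {R : realFieldType} (p : R) N : G p N 0 N.+1 = 1.
Proof.
elim: N => [|N IH]; first by rewrite /G big_ord1 /f /= expr0 !mulr1.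
rewrite G_pascal0 IH G_recr f_big ?add0n // addr0 IH; ring.
Qed.

Definition F {R : realFieldType} (p : R) a b x :=
  \sum_(t < x.+1) ('C(a + b + x, a + t))%:R * p ^+ (a + t) * (1 - p) ^+ (b + x - t).

Lemma FG {R : realFieldType} (p : R) a b x M : M = (a + b + x)%N -> F p a b x = G p M a x.+1.
Proof.
move=> ->; rewrite /F /G; apply: eq_bigr => t _; rewrite /f.
have -> : (b + x - t = a + b + x - (a + t))%N by lia.
by [].
Qed.

Lemma F1 {R : realFieldType} (p : R) a b x :
  F p a.+1 b.+1 x = p * p * F p a b.+1 x + p * (1 - p) * F p a b x.+1 +
    ((1 - p) * p * (if x is x'.+1 then F p a.+1 b.+1 x' else 0) + (1 - p) * (1 - p) * F p a.+1 b x).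
Proof.
set M := (a + b + x.+1)%N.
have E : (if x is x'.+1 then F p a.+1 b.+1 x' else 0) = G p M a.+1 x.
  case: x @M => [|x] M; first by rewrite G0.
  by apply: FG; rewrite /M; lia.
rewrite E (FG p a.+1 b.+1 x M.+1); last by rewrite /M; lia.
rewrite (FG p a b.+1 x M); last by rewrite /M; lia.
rewrite (FG p a b x.+1 M); last by rewrite /M; lia.
rewrite (FG p a.+1 b x M); last by rewrite /M; lia.
rewrite G_pascal (G_recr _ _ a x.+1) (G_recr _ _ a.+1 x).
rewrite (_ : (a + x.+1 = a.+1 + x)%N); last lia.
ring.
Qed.

Lemma F2 {R : realFieldType} (p : R) b x :
  F p 0 b.+1 x = p * (if x is x'.+1 then F p 0 b.+1 x' else 0) + (1 - p) * F p 0 b x.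
Proof.
set M := (b + x)%N.
have E : (if x is x'.+1 then F p 0 b.+1 x' else 0) = G p M 0 x.
  case: x @M => [|x] M; first by rewrite G0.
  by apply: FG; rewrite /M; lia.
rewrite E (FG p 0 b.+1 x M.+1); last by rewrite /M; lia.
rewrite (FG p 0 b x M); last by rewrite /M; lia.
rewrite G_pascal0; ring.
Qed.

Lemma F3 {R : realFieldType} (p : R) a x :
  F p a.+1 0 x = p * F p a 0 x + (1 - p) * (if x is x'.+1 then F p a.+1 0 x' else 0).
Proof.
set M := (a + x)%N.
have E : (if x is x'.+1 then F p a.+1 0 x' else 0) = G p M a.+1 x.
  case: x @M => [|x] M; first by rewrite G0.
  by apply: FG; rewrite /M; lia.
rewrite E (FG p a.+1 0 x M.+1); last by rewrite /M; lia.
rewrite (FG p a 0 x M); last by rewrite /M; lia.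
rewrite G_pascal (G_recr _ _ a.+1 x) f_big ?addr0 //; rewrite /M; lia.
Qed.

Lemma F4 {R : realFieldType} (p : R) x :
  F p 0 0 x = if x is x'.+1 then F p 0 0 x' else 1.
Proof.
rewrite (FG p 0 0 x x) // G_full.
case: x => [|x] //.
by rewrite (FG p 0 0 x x) // G_full.
Qed.

Lemma mainBF {R : realFieldType} (P : nat -> nat -> R) p :
  (forall r s : nat, (0 < r)%N -> (0 < s)%N -> P r s = p) ->
  forall k a b x, (a + b + x < k)%N -> B P a b x = F p a b x.
Proof.
move=> HP; elim=> [|k IH] a b x Hk; first lia.
case: a Hk => [|a]; case: b => [|b] Hk.
- rewrite R4 F4; case: x Hk => [|x] Hk //; apply: IH; lia.
- rewrite (R2 _ _ _ _ HP) F2 (IH 0%N b x); last lia.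
  case: x Hk => [|x] Hk //; rewrite IH //; lia.
- rewrite (R3 _ _ _ _ HP) F3 (IH a 0%N x); last lia.
  case: x Hk => [|x] Hk //; rewrite IH //; lia.
- rewrite (R1 _ _ _ _ _ HP) F1 (IH a b.+1 x); last lia.
  rewrite (IH a b x.+1); last lia.
  rewrite (IH a.+1 b x); last lia.
  case: x Hk => [|x] Hk //; rewrite (IH a.+1 b.+1 x) //; lia.
Qed.

Theorem mainTheorem14 (R : realFieldType) (P : nat -> nat -> R) (p : R)
  (a b x : nat) :
  0 <= p -> p <= 1 ->
  (forall r s : nat, (0 < r)%N -> (0 < s)%N -> P r s = p) ->
  B P a b x =
  \sum_(t < x.+1) ('C(a + b + x, a + t))%:R * p ^+ (a + t) * (1 - p) ^+ (b + x - t).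
Proof.
move=> _ _ HP; exact: (@mainBF R P p HP (a + b + x).+1 a b x (ltnSn _)).
Qed.
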